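(* Let $\mathbf{k}$ be algebraically closed of characteristic $2$, $V$ a $2n$-dimensional $\mathbf{k}$-vector space with nondegenerate symplectic form $\langle,\rangle$, $G=Sp(V)$, $\mathfrak g=\mathfrak{sp}(V)$. Let $\mathcal F^G$ be the set of complete flags $0=V_0\subset V_1\subset\dots\subset V_{2n}=V$ with $V_{2n-i}=V_i^\perp$ and $\langle,\rangle|_{V_i}=0$ for $i\le n$; it is identified with the variety of Borel subgroups of $G$ by sending a flag to its stabilizer $B$. Then for $\xi\in\mathcal N_{\mathfrak g^*}$ and a flag $F=(V_i)\in\mathcal F^G$ with stabilizer $B$ (Lie algebra $\mathfrak b$), we have $\xi(\mathfrak b)=0$ if and only if $\beta_\xi(V_i,V_{2n+1-i})=0$ and $\alpha_\xi(V_i)=0$ for all $i\le n$. Thus the Springer fiber $\mathcal B^G_\xi$ is identified with $\mathcal F^G_\xi=\{F\in\mathcal F^G:\beta_\xi(V_i,V_{2n+1-i})=0,\ \alpha_\xi(V_i)=0\ \forall i\le n\}$.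
   Context: For $\xi\in\mathfrak g^*$ choose $X\in\mathfrak{gl}(V)$ with $\xi(x)=\mathrm{tr}(Xx)$ for all $x\in\mathfrak g$; $\alpha_\xi(v)=\langle v,Xv\rangle$ is a well-defined quadratic form on $V$, and $\beta_\xi(v,w)=\alpha_\xi(v+w)-\alpha_\xi(v)-\alpha_\xi(w)$. $\mathcal N_{\mathfrak g^*}$ is the set of $\xi\in\mathfrak g^*$ vanishing on the Lie algebra of some Borel subgroup; the Springer fiber $\mathcal B^G_\xi$ is the set of Borel subgroups $B$ with $\xi(\mathrm{Lie}\,B)=0$. *)

(* Defs.v *)
(* V = k^(2n) as row vectors; linear maps act on the right (v *m A);
   subspaces of V are row spaces of square matrices, membership (u <= A)%MS. *)
From HB Require Import structures.
From mathcomp Require Import all_boot all_order all_algebra.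
Set Implicit Arguments. Unset Strict Implicit. Unset Printing Implicit Defensive.
Import GRing.Theory.
Local Open Scope ring_scope.

Definition bform (k : fieldType) (m : nat) (J : 'M[k]_m) (u v : 'rV[k]_m) : k :=
  (u *m J *m v^T) 0 0.

Definition symplectic_form (k : fieldType) (m : nat) (J : 'M[k]_m) : Prop :=
  (forall u, bform J u u = 0) /\
  (forall u, (forall v, bform J u v = 0) -> u = 0).

Definition in_sp (k : fieldType) (m : nat) (J : 'M[k]_m) (x : 'M[k]_m) : Prop :=
  forall u v, bform J (u *m x) v + bform J u (v *m x) = 0.

(* complete flag V_0 ⊂ V_1 ⊂ ... ⊂ V_m, dim V_i = i (only indices i <= m matter) *)
Definition complete_flag (k : fieldType) (m : nat) (F : nat -> 'M[k]_m) : Prop :=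
  (forall i, i <= m -> \rank (F i) = i)%N /\
  (forall i, i < m -> (F i <= F i.+1)%MS)%N.

Definition in_FG (k : fieldType) (n : nat) (J : 'M[k]_(n.*2))
    (F : nat -> 'M[k]_(n.*2)) : Prop :=
  complete_flag F /\
  (forall i, (i <= n.*2)%N -> forall w : 'rV[k]_(n.*2),
      (w <= F (n.*2 - i)%N)%MS <-> (forall v, (v <= F i)%MS -> bform J v w = 0)) /\
  (forall i, (i <= n)%N -> forall u v, (u <= F i)%MS -> (v <= F i)%MS -> bform J u v = 0).

(* Lie algebra b of the stabilizer B in Sp(V) of the flag F
   (B is smooth, so Lie B = {x in sp(V) | x V_i ⊆ V_i for all i}) *)
Definition in_borel_lie (k : fieldType) (n : nat) (J : 'M[k]_(n.*2))
    (F : nat -> 'M[k]_(n.*2)) (x : 'M[k]_(n.*2)) : Prop :=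
  in_sp J x /\ (forall i, (i <= n.*2)%N -> (F i *m x <= F i)%MS).

(* xi (a functional on g, only its values on g matter) vanishes on Lie B_F *)
Definition vanishes_on_borel (k : fieldType) (n : nat) (J : 'M[k]_(n.*2))
    (xi : 'M[k]_(n.*2) -> k) (F : nat -> 'M[k]_(n.*2)) : Prop :=
  forall x, in_borel_lie J F x -> xi x = 0.

Definition in_nilp_cone (k : fieldType) (n : nat) (J : 'M[k]_(n.*2))
    (xi : 'M[k]_(n.*2) -> k) : Prop :=
  exists F, in_FG J F /\ vanishes_on_borel J xi F.

Definition alpha (k : fieldType) (m : nat) (J X : 'M[k]_m) (v : 'rV[k]_m) : k :=
  bform J v (v *m X).
Definition beta (k : fieldType) (m : nat) (J X : 'M[k]_m) (v w : 'rV[k]_m) : k :=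
  alpha J X (v + w) - alpha J X v - alpha J X w.

(* Main.v *)
Require Import Defs.
From HB Require Import structures.
From mathcomp Require Import all_boot all_order all_algebra.
From mathcomp Require Import ring zify.
Set Implicit Arguments. Unset Strict Implicit. Unset Printing Implicit Defensive.
Import GRing.Theory.
Local Open Scope ring_scope.

Section Basic.
Variables (k : fieldType) (m : nat) (J : 'M[k]_m).

Lemma bformDl u v w : bform J (u + v) w = bform J u w + bform J v w.
Proof. by rewrite /bform !mulmxDl mxE. Qed.
Lemma bformDr u v w : bform J w (u + v) = bform J w u + bform J w v.
Proof. by rewrite /bform linearD /= mulmxDr mxE. Qed.
Lemma bformZl c u w : bform J (c *: u) w = c * bform J u w.
Proof. by rewrite /bform -!scalemxAl mxE. Qed.
Lemma bformZr c u w : bform J w (c *: u) = c * bform J w u.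
Proof. by rewrite /bform linearZ /= -scalemxAr mxE. Qed.
Lemma bform0l w : bform J 0 w = 0.
Proof. by rewrite /bform !mul0mx mxE. Qed.

Lemma scal_tr (u w : 'rV[k]_m) (M : 'M[k]_m) :
  (u *m M *m w^T) 0 0 = (w *m M^T *m u^T) 0 0.
Proof.
transitivity ((u *m M *m w^T)^T 0 0); first by rewrite [RHS]mxE.
by rewrite !trmx_mul trmxK mulmxA.
Qed.

Lemma entry_delta (A : 'M[k]_m) (i j : 'I_m) :
  (delta_mx 0 i *m A *m (delta_mx 0 j)^T : 'M[k]_1) 0 0 = A i j.
Proof. by rewrite trmx_delta -mulmxA -colE -rowE !mxE. Qed.

Hypothesis alt : forall u, bform J u u = 0.

Lemma bform_anti u v : bform J v u = - bform J u v.
Proof.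
have := alt (u + v); rewrite bformDl !bformDr !alt add0r addr0.
by move=> H; apply/eqP; rewrite -addr_eq0 addrC H.
Qed.

Lemma trJ : J^T = - J.
Proof.
apply/matrixP => i j; rewrite !mxE -!entry_delta.
exact: (bform_anti (delta_mx 0 i) (delta_mx 0 j)).
Qed.

Lemma bformX (X : 'M[k]_m) (u w : 'rV[k]_m) : bform J u (w *m X) = - (w *m X *m J *m u^T : 'M[k]_1) 0 0.
Proof. by rewrite /bform scal_tr trJ mulmxN mulNmx mxE. Qed.

Lemma rank1_mul (y u w : 'rV[k]_m) : y *m (J *m u^T *m w) = bform J y u *: w.
Proof. by rewrite !mulmxA [y *m J *m u^T]mx11_scalar mul_scalar_mx. Qed.

End Basic.

Section Flag.
Variables (k : fieldType) (m : nat) (F : nat -> 'M[k]_m).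
Hypothesis HF : complete_flag F.

Lemma flag_mono i j : (i <= j)%N -> (j <= m)%N -> (F i <= F j)%MS.
Proof.
elim: j => [|j IH] ij jm; first by rewrite leqn0 in ij; rewrite (eqP ij).
case: (ltngtP i j.+1) ij => // [ij|<-] _; last exact: submx_refl.
apply: submx_trans (IH ij (ltnW jm)) _; exact: HF.2.
Qed.

Definition enew (a : 'I_m) : 'rV[k]_m :=
  row (odflt a [pick r | ~~ (row r (F a.+1) <= F a)%MS]) (F a.+1).

Lemma enew_in a : (enew a <= F a.+1)%MS.
Proof. exact: row_sub. Qed.

Lemma enew_new a : ~~ (enew a <= F a)%MS.
Proof.
rewrite /enew; case: pickP => [r //|H] /=.
have: (F a.+1 <= F a)%MS by apply/row_subP => r; have := H r; rewrite /= => /negbFE.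
move/mxrankS; rewrite !HF.1 ?ltnn //; exact: ltnW.
Qed.

Definition Pm : 'M[k]_m := \matrix_(a < m) enew a.

Lemma row_pidP (i : nat) (a : 'I_m) : (a < i)%N -> row a ((pid_mx i : 'M[k]_m) *m Pm) = enew a.
Proof.
move=> ai; transitivity (row a Pm); last exact: rowK.
rewrite row_mul [row a Pm]rowE; congr (_ *m _).
apply/rowP => j; by rewrite !mxE ai andbT eqxx /= eq_sym.
Qed.

Lemma flag_span i : (i <= m)%N -> (F i <= (pid_mx i : 'M[k]_m) *m Pm)%MS.
Proof.
elim: i => [|i IH] im.
  by move: (HF.1 0 (leq0n _)); move/eqP; rewrite mxrank_eq0 => /eqP ->; exact: sub0mx.
pose a := Ordinal im.
set S := (F i + enew a)%MS.
have SF : (S <= F i.+1)%MS.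
  by rewrite addsmx_sub enew_in (HF.2 i im).
have ltS : (F i < S)%MS.
  rewrite ltmxE addsmxSl /=; apply/negP => H; move: (enew_new a); rewrite /=.
  by move/negP; apply; apply: submx_trans H; exact: addsmxSr.
have FS : (F i.+1 <= S)%MS.
  suff: (S == F i.+1)%MS by case/andP.
  rewrite -(geq_leqif (mxrank_leqif_eq SF)).
  rewrite HF.1 //; move: ltS; rewrite ltmxErank => /andP[_]; rewrite HF.1 //; exact: ltnW.
apply: submx_trans FS _; rewrite addsmx_sub; apply/andP; split.
  apply: submx_trans (IH (ltnW im)) _.
  have -> : (pid_mx i : 'M[k]_m) = pid_mx i *m (pid_mx i.+1 : 'M[k]_m).
    by rewrite mul_pid_mx (minn_idPl (leqnSn i)) (minn_idPr (ltnW im)).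
  by rewrite -mulmxA submxMl.
by rewrite -(row_pidP (i := i.+1) (a := a)) //; exact: row_sub.
Qed.

Lemma Pm_unit : Pm \in unitmx.
Proof.
rewrite -row_full_unit /row_full eqn_leq rank_leq_col /=.
by rewrite -{1}(HF.1 m (leqnn m)) mxrankS // -[Pm]mul1mx -pid_mx_1 flag_span.
Qed.

End Flag.

Lemma J_unit (k : fieldType) m (J : 'M[k]_m) : symplectic_form J -> J \in unitmx.
Proof.
case=> _ nd; rewrite -row_free_unit -kermx_eq0; apply/eqP/row_matrixP => i; rewrite row0.
by apply: nd => v; rewrite /bform -row_mul mulmx_ker row0 !mul0mx mxE.
Qed.

Lemma sum_pair (R : zmodType) (h : nat -> nat -> R) m :
  (forall a, h a a = 0) -> (forall a b, (a < b)%N -> h a b + h b a = 0) ->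
  \sum_(a < m) \sum_(b < m) h a b = 0.
Proof.
move=> h0 h1; elim: m => [|m IH]; first by rewrite big_ord0.
rewrite big_ord_recr /=.
rewrite (eq_bigr (fun a : 'I_m => \sum_(b < m) h a b + h a m)); last first.
  by move=> a _; rewrite big_ord_recr.
rewrite big_split /= IH add0r big_ord_recr /= h0 addr0 -big_split /=.
by rewrite big1 // => a _; exact: h1 (ltn_ord a).
Qed.

Lemma sum_pair_ord (R : zmodType) m (h : 'I_m -> 'I_m -> R) :
  (forall a, h a a = 0) -> (forall a b : 'I_m, (a < b)%N -> h a b + h b a = 0) ->
  \sum_a \sum_b h a b = 0.
Proof.
move=> h0 h1.
pose hn (a b : nat) := if (insub a : option 'I_m) is Some a' then
   (if (insub b : option 'I_m) is Some b' then h a' b' else 0) else 0.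
have E : forall a b : 'I_m, hn a b = h a b by move=> a b; rewrite /hn !valK.
rewrite (eq_bigr (fun a : 'I_m => \sum_(b < m) hn a b)); last first.
  by move=> a _; apply: eq_bigr => b _; rewrite E.
apply: sum_pair => [a|a b ab]; rewrite /hn.
  by case: (insub a) => [a'|] //=.
case: insubP => [a' _ ea|_]; case: insubP => [b' _ eb|_] //=; rewrite ?addr0 //.
by apply: h1; rewrite ea eb.
Qed.

Lemma entry_rows (k : fieldType) m (A M B : 'M[k]_m) a b :
  (A *m M *m B^T) a b = (row a A *m M *m (row b B)^T : 'M[k]_1) 0 0.
Proof. by rewrite -(entry_delta (A *m M *m B^T) a b) !rowE trmx_mul !mulmxA. Qed.

Lemma pres_sub (k : fieldType) m (A x : 'M[k]_m) :
  (forall y : 'rV[k]_m, (y <= A)%MS -> (y *m x <= A)%MS) -> (A *m x <= A)%MS.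
Proof. by move=> H; apply/row_subP => r; rewrite row_mul; apply: H; exact: row_sub. Qed.

Section Main.
Variables (k : fieldType) (n : nat) (J X : 'M[k]_(n.*2)) (F : nat -> 'M[k]_(n.*2)).
Hypotheses (HJ : symplectic_form J) (HFG : in_FG J F).

Local Notation m := (n.*2).
Let alt := HJ.1.
Let HF := HFG.1.
Let perp := HFG.2.1.
Let iso := HFG.2.2.

Lemma beta_expand u v : beta J X u v = bform J u (v *m X) + bform J v (u *m X).
Proof. rewrite /beta /alpha !mulmxDl !bformDl !bformDr; ring. Qed.

Let P := Pm F.
Let R := J *m P^T.
Let Q := invmx R.

Lemma Ru : R \in unitmx.
Proof. by rewrite unitmx_mul unitmx_tr J_unit // Pm_unit. Qed.

Lemma PJQ : P *m J *m Q^T = -1.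
Proof.
have := congr1 trmx (mulVmx Ru); rewrite trmx_mul trmx1 /R trmx_mul trmxK (trJ alt).
by rewrite mulmxN mulNmx => /eqP; rewrite eqr_oppLR => /eqP.
Qed.

Lemma JQP : J *m (Q^T *m P) = -1.
Proof.
have : P *m (- (J *m Q^T)) = 1 by rewrite mulmxN mulmxA PJQ opprK.
by move/mulmx1C; rewrite mulNmx mulmxA => /eqP; rewrite eqr_oppLR => /eqP.
Qed.

Lemma Qperp (c : nat) (d : 'I_m) (y : 'rV[k]_m) :
  (c <= d)%N -> (y <= F c)%MS -> bform J y (row d Q) = 0.
Proof.
move=> cd yF.
have cm : (c <= m)%N by apply: leq_trans cd (ltnW (ltn_ord d)).
have /submxP[z ->] := submx_trans yF (flag_span HF cm).
rewrite /bform tr_row colE.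
have PJQ' : P *m (J *m Q^T) = -1 by rewrite mulmxA PJQ.
have E : z *m pid_mx c *m P *m J *m Q^T = - (z *m pid_mx c).
  by rewrite -!mulmxA PJQ' mulmxN mulmx1 mulmxN.
rewrite !mulmxA E -colE !mxE big1 ?oppr0 // => j _.
rewrite !mxE; case: eqP => [ej|]; last by rewrite mulr0.
by rewrite /= ej ltnNge cd mulr0.
Qed.

Lemma back (x : 'M[k]_m) : in_borel_lie J F x ->
   (forall i, (0 < i <= n)%N ->
      forall u v, (u <= F i)%MS -> (v <= F (n.*2.+1 - i)%N)%MS -> beta J X u v = 0) ->
   (forall i, (i <= n)%N -> forall u, (u <= F i)%MS -> alpha J X u = 0) ->
  \tr (X *m x) = 0.
Proof.
case=> xsp xfl hb ha.
have RQ : R *m Q = 1 := mulmxV Ru.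
pose T := - (Q *m x *m J *m Q^T).
have xE : x = R *m T *m P.
  rewrite /T mulmxN mulNmx !mulmxA RQ mul1mx -!mulmxA JQP mulmxN mulmx1 opprK //.
have TE : forall c d, T c d = - bform J (row c Q *m x) (row d Q).
  by move=> c d; rewrite /T mxE entry_rows /bform row_mul.
have Tsym : forall c d, T c d = T d c.
  move=> c d; rewrite !TE; congr (- _).
  have := xsp (row c Q) (row d Q) => /eqP; rewrite addr_eq0 => /eqP ->.
  by rewrite -(bform_anti alt).
have Tz : forall c d : 'I_m, (m <= c + d)%N -> T c d = 0.
  move=> c d cd; rewrite TE.
  have cm : (c <= m)%N by exact: ltnW.
  have g1 : (row c Q <= F (m - c))%MS.
    by apply/(perp cm) => v vF; exact: Qperp (leqnn c) vF.
  have g2 : (row c Q *m x <= F (m - c))%MS.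
    by apply: submx_trans (submxMr x g1) _; apply: xfl; exact: leq_subr.
  have g3 : (row c Q *m x <= F d)%MS.
    apply: submx_trans g2 (flag_mono HF _ _); first by lia.
    exact: ltnW.
  by rewrite (Qperp (leqnn d) g3) oppr0.
pose A := P *m X *m J *m P^T.
have AE : forall a b, A a b = (enew F a *m X *m J *m (enew F b)^T : 'M[k]_1) 0 0.
  move=> a b; rewrite /A entry_rows row_mul.
  by rewrite /P /Pm !rowK.
have Aa : forall a, A a a = - alpha J X (enew F a).
  by move=> a; rewrite /alpha (bformX alt) opprK AE.
have Ab : forall a b, A a b + A b a = - beta J X (enew F a) (enew F b).
  move=> a b; rewrite beta_expand !(bformX alt) !AE; ring.
rewrite xE !mulmxA mxtrace_mulC !mulmxA -/A /mxtrace.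
under eq_bigr do rewrite mxE.
apply: sum_pair_ord => [a|a b ab].
  have [na|an] := ltnP a n.
    by rewrite Aa (ha a.+1 na) ?enew_in // oppr0 mul0r.
  by rewrite Tz ?mulr0 //; lia.
rewrite (Tsym a b) -mulrDl Ab.
have [na|an] := ltnP (a + b) m.
  rewrite (hb a.+1) ?oppr0 ?mul0r ?enew_in //; first by apply/andP; split => //; lia.
  apply: submx_trans (enew_in F b) (flag_mono HF _ _); lia.
by rewrite Tz ?mulr0 // addnC.
Qed.

Lemma tr_rank1 (u v : 'rV[k]_m) : \tr (X *m (J *m u^T *m v)) = (v *m X *m J *m u^T : 'M[k]_1) 0 0.
Proof. by rewrite !mulmxA mxtrace_mulC !mulmxA /mxtrace big_ord1. Qed.

Lemma fwd_alpha i u : (i <= n)%N -> (u <= F i)%MS ->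
  in_borel_lie J F (J *m u^T *m u) /\ \tr (X *m (J *m u^T *m u)) = - alpha J X u.
Proof.
move=> iN uF; split; last by rewrite tr_rank1 /alpha (bformX alt) opprK.
split.
  move=> y z; rewrite !rank1_mul bformZl bformZr (bform_anti alt u z).
  by rewrite mulNr mulrC addrN.
move=> j jm; apply: pres_sub => y yF; rewrite rank1_mul.
have im : (i <= m)%N by rewrite -addnn; lia.
have [ij|ji] := leqP i j.
  by rewrite scalemx_sub // (submx_trans uF) // flag_mono.
rewrite (iso iN (submx_trans yF (flag_mono HF (ltnW ji) im)) uF) scale0r.
exact: sub0mx.
Qed.

Lemma fwd_beta i u v : (0 < i <= n)%N -> (u <= F i)%MS -> (v <= F (m.+1 - i))%MS ->
  in_borel_lie J F (J *m u^T *m v + J *m v^T *m u) /\ \tr (X *m (J *m u^T *m v + J *m v^T *m u)) = - beta J X u v.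
Proof.
move=> /andP[i0 iN] uF vF; split; last first.
  rewrite mulmxDr mxtraceD !tr_rank1 beta_expand !(bformX alt); ring.
split.
  move=> y z; rewrite !mulmxDr !rank1_mul !bformDl !bformDr !bformZl !bformZr.
  rewrite (bform_anti alt u z) (bform_anti alt v z); ring.
move=> j jm; apply: pres_sub => y yF; rewrite mulmxDr !rank1_mul.
have im : (i <= m)%N by rewrite -addnn; lia.
have [hj|jh] := leqP (m.+1 - i) j.
  apply: addmx_sub; apply: scalemx_sub; first exact: submx_trans vF (flag_mono HF hj jm).
  by apply: submx_trans uF (flag_mono HF _ jm); rewrite -addnn in hj *; lia.
have [ij|ji] := leqP i j.
  have yu : bform J y u = 0.
    rewrite (bform_anti alt); apply/eqP; rewrite oppr_eq0; apply/eqP.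
    move: (perp im y) => [H _]; apply: H => //.
    by apply: submx_trans yF (flag_mono HF _ _); rewrite -?addnn in jh *; lia.
  by rewrite yu scale0r add0r scalemx_sub // (submx_trans uF) // flag_mono.
have i1m : (i.-1 <= m)%N by lia.
have yi1 : (y <= F i.-1)%MS by apply: submx_trans yF (flag_mono HF _ _); lia.
have yv : bform J y v = 0.
  move: (perp i1m v) => [H _]; apply: H => //.
  by have -> : (m - i.-1 = m.+1 - i)%N by lia.
rewrite yv (iso iN (submx_trans yF (flag_mono HF (ltnW ji) im)) uF) !scale0r addr0.
exact: sub0mx.
Qed.
End Main.

Theorem lemma3p2 (k : closedFieldType) (n : nat) (J : 'M[k]_(n.*2))
    (xi : 'M[k]_(n.*2) -> k) (X : 'M[k]_(n.*2)) (F : nat -> 'M[k]_(n.*2)) :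
  (2%N \in [pchar k]) ->
  symplectic_form J ->
  (forall x, in_sp J x -> xi x = \tr (X *m x)) ->
  in_nilp_cone J xi ->
  in_FG J F ->
  (vanishes_on_borel J xi F <->
   (forall i, (0 < i <= n)%N ->
      forall u v, (u <= F i)%MS -> (v <= F (n.*2.+1 - i)%N)%MS -> beta J X u v = 0) /\
   (forall i, (i <= n)%N -> forall u, (u <= F i)%MS -> alpha J X u = 0)).
Proof.
move=> _ HJ Hxi _ HFG; split.
  move=> van; split.
    move=> i iN u v uF vF.
    have [Hb Htr] := fwd_beta X HJ HFG iN uF vF.
    have := van _ Hb; rewrite Hxi; last exact: Hb.1. move=> H0.
    by apply/eqP; rewrite -oppr_eq0; apply/eqP; rewrite -Htr.
  move=> i iN u uF.
  have [Hb Htr] := fwd_alpha X HJ HFG iN uF.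
  have := van _ Hb; rewrite Hxi; last exact: Hb.1. move=> H0.
  by apply/eqP; rewrite -oppr_eq0; apply/eqP; rewrite -Htr.
case=> hb ha x Hx; rewrite Hxi; last exact: Hx.1. exact (back HJ HFG Hx hb ha).
Qed.
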